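(* Let $S$ be a finite set and $f:S\to\mathbb{Z}_3$ a function such that, for some ordering $a,b,c$ of the elements of $\mathbb{Z}_3$, $|f^{-1}(a)|=\frac{2}{3}|S|$ and $|f^{-1}(b)|=|f^{-1}(c)|=\frac16|S|$. Let $\omega=e^{2\pi i/3}$, $\phi=\frac{1}{\sqrt3}\sum_{h\in\mathbb{Z}_3}\omega^{-h}|h\rangle$, $u_S=|S|^{-1/2}\sum_s|s\rangle$, $U_f(|s\rangle\otimes|g\rangle)=|s\rangle\otimes|f(s)+g\rangle$, $D=\mathrm{id}-\frac{2}{|S|}\sum_{s,t}|s\rangle\langle t|$ on $\mathbb{C}[S]$, and $\psi=(D\otimes\mathrm{id})U_f(u_S\otimes\phi)$. Then for every $s\in S$ with $f(s)=a$ one has $(\langle s|\otimes\mathrm{id})\psi=0$; hence measuring the first factor of $\psi$ in the basis $\{|s\rangle\}$ returns, with certainty, an element $s$ with $f(s)\in\{b,c\}$.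
   Context: $\mathbb{C}[X]$ denotes the Hilbert space with orthonormal basis $\{|x\rangle : x\in X\}$ for a finite set $X$; $\mathbb{Z}_3$ is the integers mod 3 under addition. *)

(* Defs.v *)
From HB Require Import structures.
From mathcomp Require Import all_boot all_order all_algebra all_field.
Set Implicit Arguments. Unset Strict Implicit. Unset Printing Implicit Defensive.
Import Order.TTheory GRing.Theory Num.Theory.
Local Open Scope ring_scope.

(* Vectors of C[X] (basis |x>, x in X) are represented by coordinate
   functions X -> algC.  C[S] (x) C[Z_3] = C[S * Z_3]. *)
Definition vecC (X : finType) := X -> algC.

(* omega = e^{2 pi i/3} = (-1 + i sqrt 3)/2 *)
Definition omega : algC := (-1 + 'i * sqrtC 3) / 2.

Definition phi3 : vecC ('Z_3) :=
  fun h => (sqrtC 3)^-1 * omega ^- (val h).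

Definition uS (S : finType) : vecC S := fun _ => (sqrtC (#|S|%:R))^-1.

Definition tens (S T : finType) (v : vecC S) (w : vecC T) : vecC (S * T)%type :=
  fun p => v p.1 * w p.2.

(* U_f (|s> (x) |g>) = |s> (x) |f s + g>, so (U_f v)(s, g') = v(s, g' - f s) *)
Definition Uf (S : finType) (f : S -> 'Z_3) (v : vecC (S * 'Z_3)%type)
  : vecC (S * 'Z_3)%type :=
  fun p => v (p.1, p.2 - f p.1).

(* (D (x) id) with D = id - 2/|S| sum_{s,t} |s><t| *)
Definition Dtens (S : finType) (v : vecC (S * 'Z_3)%type)
  : vecC (S * 'Z_3)%type :=
  fun p => v p - 2 / (#|S|%:R) * \sum_(t : S) v (t, p.2).

Definition psi (S : finType) (f : S -> 'Z_3) : vecC (S * 'Z_3)%type :=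
  Dtens (Uf f (tens (@uS S) phi3)).

Definition braS (S : finType) (s : S) (v : vecC (S * 'Z_3)%type)
  : vecC ('Z_3) := fun g => v (s, g).

(* Main.v *)
Require Import Defs.
From HB Require Import structures.
From mathcomp Require Import all_boot all_order all_algebra all_field.
From mathcomp Require Import ring.
From Stdlib Require Import FunctionalExtensionality.
Import Order.TTheory GRing.Theory Num.Theory.
Local Open Scope ring_scope.
Lemma om2 : omega ^+ 2 + omega + 1 = 0.
Proof.
rewrite /omega.
have hx : ('i * sqrtC 3) ^+ 2 = - 3 :> algC by rewrite exprMn sqrCi sqrtCK mulN1r.
have -> : ((-1 + 'i * sqrtC 3) / 2) ^+ 2 + (-1 + 'i * sqrtC 3) / 2 + 1
   = (('i * sqrtC 3) ^+ 2 + 3) / 4 :> algC by field.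
by rewrite hx addNr mul0r.
Qed.
Lemma om3 : omega ^+ 3 = 1.
Proof.
apply/eqP; rewrite -subr_eq0.
have -> : omega ^+ 3 - 1 = (omega - 1) * (omega ^+ 2 + omega + 1) by ring.
by rewrite om2 mulr0.
Qed.
Lemma om_neq0 : omega != 0.
Proof. by apply/eqP=> h; move: om3; rewrite h expr0n /= => /eqP; rewrite eq_sym oner_eq0. Qed.
Lemma norm_om : `|omega| = 1.
Proof.
apply/eqP; rewrite -(@pexpr_eq1 _ _ 3) // -normrX om3 normr1 //.
Qed.
Lemma conj_om : omega^* = omega ^+ 2.
Proof.
have h : omega * omega^* = 1 by rewrite -normCK norm_om expr1n.
have h2 : omega * omega ^+ 2 = 1 by rewrite -exprS om3.
by apply: (mulfI om_neq0); rewrite h h2.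
Qed.
Definition e (x : 'Z_3) : algC := omega ^+ val x.
Lemma eD x y : e (x + y) = e x * e y.
Proof. by rewrite /e -exprD /= expr_mod // om3. Qed.
Lemma e_neq0 x : e x != 0.
Proof. by rewrite /e expf_neq0 // om_neq0. Qed.
Lemma norm_e x : `|e x| = 1.
Proof. by rewrite /e normrX norm_om expr1n. Qed.
Lemma eB g x : (e (g - x))^-1 = e x / e g.
Proof.
have -> : e g = e (g - x) * e x.
  by rewrite -eD (subrK x g).
by field; rewrite ?e_neq0.
Qed.
Lemma cover (a b c x : 'Z_3) : uniq [:: a; b; c] -> [|| x == a, x == b | x == c].
Proof.
by case: a b c x => [[|[|[|//]]] ?] [[|[|[|//]]] ?] [[|[|[|//]]] ?] [[|[|[|//]]] ?].
Qed.
Lemma esum (a b c : 'Z_3) : uniq [:: a; b; c] -> e a + e b + e c = 0.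
Proof.
have h := om2.
case: a b c => [[|[|[|//]]] ?] [[|[|[|//]]] ?] [[|[|[|//]]] ?] //= _;
  rewrite /e /= -h; ring.
Qed.
Lemma dist3 (x y : 'Z_3) : x != y -> `|e x - e y| ^+ 2 = 3.
Proof.
move=> hxy.
have -> : e x - e y = e y * (e (x - y) - 1).
  by rewrite mulrBr mulr1 -eD (addrC y) (subrK y x).
rewrite normrM norm_e mul1r normCK rmorphB rmorph1.
have : x - y != 0 by rewrite subr_eq0.
rewrite /e; case: (x - y) => [[|[|[|//]]] ?] //= _;
  rewrite rmorphXn /= conj_om; apply/eqP; rewrite -subr_eq0.
  have -> : (omega ^+ 1 - 1) * ((omega ^+ 2) ^+ 1 - 1) - 3 = (omega ^+ 3 - 1) - (omega ^+ 2 + omega + 1) by ring.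
  by rewrite om3 om2 subrr subr0.
have -> : (omega ^+ 2 - 1) * ((omega ^+ 2) ^+ 2 - 1) - 3 = (omega ^+ 3 - 1) * (omega ^+ 3 + 1) - (omega ^+ 3 - 1) * omega - (omega ^+ 2 + omega + 1) by ring.
by rewrite om3 om2 subrr !mul0r !subr0.
Qed.
Lemma cnt (S : finType) (P : pred S) : \sum_(t : S) (P t)%:R = #|[set t | P t]|%:R :> algC.
Proof. rewrite -sum1dep_card natr_sum [RHS]big_mkcond; apply: eq_bigr => t _; by case: (P t). Qed.

Lemma sumE (S : finType) (f : S -> 'Z_3) (a b c : 'Z_3) :
  uniq [:: a; b; c] ->
  (3 * #|[set s | f s == a]| = 2 * #|S|)%N ->
  (6 * #|[set s | f s == b]| = #|S|)%N ->
  (6 * #|[set s | f s == c]| = #|S|)%N ->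
  \sum_(t : S) e (f t) = #|S|%:R / 2 * e a.
Proof.
move=> U Ha Hb Hc.
have := U; rewrite /= !inE !negb_or => /andP [/andP [hab hac] /andP [hbc _]].
have hba : (b == a) = false by rewrite eq_sym (negbTE hab).
have hca : (c == a) = false by rewrite eq_sym (negbTE hac).
have hcb : (c == b) = false by rewrite eq_sym (negbTE hbc).
rewrite (eq_bigr (fun t => (f t == a)%:R * e a + (f t == b)%:R * e b + (f t == c)%:R * e c)); last first.
  move=> t _; case/or3P: (@cover a b c (f t) U) => /eqP ->;
  rewrite ?eqxx ?(negbTE hab) ?(negbTE hac) ?(negbTE hbc) ?hba ?hca ?hcb /=; ring.
rewrite !big_split /= -!mulr_suml !cnt.
move: Ha Hb Hc.
set na := #|[set s | f s == a]|; set nb := #|[set s | f s == b]|; set nc := #|[set s | f s == c]|.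
set n := #|S|.
move=> /(congr1 (fun m => m%:R : algC)) Ha /(congr1 (fun m => m%:R : algC)) Hb
  /(congr1 (fun m => m%:R : algC)) Hc.
rewrite !natrM in Ha Hb Hc.
have Ea : na%:R = 2%:R * n%:R / 3%:R :> algC by rewrite -Ha; field; rewrite ?pnatr_eq0.
have Eb : nb%:R = n%:R / 6%:R :> algC by rewrite -Hb; field; rewrite ?pnatr_eq0.
have Ec : nc%:R = n%:R / 6%:R :> algC by rewrite -Hc; field; rewrite ?pnatr_eq0.
have Es : e c = - e a - e b by have h := @esum a b c U; apply/eqP; rewrite -subr_eq0 -h; apply/eqP; ring.
by rewrite Ea Eb Ec Es; field.
Qed.

Lemma psiE (S : finType) (f : S -> 'Z_3) (a b c : 'Z_3) :
  uniq [:: a; b; c] ->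
  (3 * #|[set s | f s == a]| = 2 * #|S|)%N ->
  (6 * #|[set s | f s == b]| = #|S|)%N ->
  (6 * #|[set s | f s == c]| = #|S|)%N ->
  (0 < #|S|)%N ->
  forall s g, psi f (s, g) =
    (sqrtC (#|S|%:R))^-1 * (sqrtC 3)^-1 / e g * (e (f s) - e a).
Proof.
move=> U Ha Hb Hc n0 s g.
rewrite /psi /Dtens /Uf /tens /uS /phi3 /= eB.
rewrite (eq_bigr (fun t => (sqrtC (#|S|%:R))^-1 * (sqrtC 3)^-1 / e g * e (f t))); last first.
  by move=> t _; rewrite /= eB; ring.
rewrite -mulr_sumr (@sumE S f a b c U Ha Hb Hc).
have nz : (#|S|%:R : algC) != 0 by rewrite pnatr_eq0 -lt0n.
have := e_neq0 g.
have : sqrtC (#|S|%:R : algC) != 0 by rewrite sqrtC_eq0.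
have : sqrtC (3 : algC) != 0 by rewrite sqrtC_eq0 pnatr_eq0.
move=> h1 h2 h3.
by field; rewrite h1 h2 h3 nz.
Qed.

Lemma cntc (S : finType) (P : pred S) (x : algC) :
  \sum_(t | P t) x = #|[set t | P t]|%:R * x.
Proof.
rewrite big_mkcond (eq_bigr (fun t => (P t)%:R * x)) -?mulr_suml ?cnt //.
by move=> t _; case: (P t); rewrite ?mul1r ?mul0r.
Qed.

Theorem mainTheorem9 (S : finType) (f : S -> 'Z_3) (a b c : 'Z_3) :
  uniq [:: a; b; c] ->
  (3 * #|[set s | f s == a]| = 2 * #|S|)%N ->
  (6 * #|[set s | f s == b]| = #|S|)%N ->
  (6 * #|[set s | f s == c]| = #|S|)%N ->
  (forall s : S, f s = a -> braS s (psi f) = (fun _ => 0)) /\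
  ((0 < #|S|)%N ->
     \sum_(s : S | (f s == b) || (f s == c)) \sum_(g : 'Z_3) `|psi f (s, g)| ^+ 2 = 1).
Proof.
move=> U Ha Hb Hc; split.
  move=> s fsa.
  have n0 : (0 < #|S|)%N by apply/card_gt0P; exists s.
  apply: functional_extensionality => g.
  by rewrite /braS (@psiE S f a b c U Ha Hb Hc n0) fsa subrr mulr0.
move=> n0.
have := U; rewrite /= !inE !negb_or => /andP [/andP [hab hac] /andP [hbc _]].
have hba : (b == a) = false by rewrite eq_sym (negbTE hab).
have hca : (c == a) = false by rewrite eq_sym (negbTE hac).
have hcb : (c == b) = false by rewrite eq_sym (negbTE hbc).
have nz : (#|S|%:R : algC) != 0 by rewrite pnatr_eq0 -lt0n.
rewrite (eq_bigl (fun s => f s != a)); last first.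
  move=> t /=; case/or3P: (@cover a b c (f t) U) => /eqP ->;
  by rewrite ?eqxx ?(negbTE hab) ?(negbTE hac) ?(negbTE hbc) ?hba ?hca ?hcb.
rewrite (eq_bigr (fun s => (#|S|%:R : algC)^-1 *+ 3)); last first.
  move=> s hs.
  rewrite (eq_bigr (fun _ => (#|S|%:R : algC)^-1)); first by rewrite sumr_const card_ord.
  move=> g _; rewrite (@psiE S f a b c U Ha Hb Hc n0) !normrM !normfV norm_e invr1 mulr1.
  rewrite !exprMn (@dist3 (f s) a hs) !ger0_norm ?sqrtC_ge0 ?ler0n // !exprVn !sqrtCK.
  by field; exact: nz.
rewrite cntc.
have Hm : (#|[set s | f s != a]| + #|[set s | f s == a]|)%N = #|S|.
  rewrite -(cardC [set s | f s == a]) addnC; congr (_ + _)%N.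
  by apply: eq_card => s; rewrite !inE.
move: Hm Ha.
set m := #|[set s | f s != a]|; set na := #|[set s | f s == a]|; set n := #|S|.
move=> /(congr1 (fun k => k%:R : algC)) Hm /(congr1 (fun k => k%:R : algC)) Ha'.
rewrite natrD in Hm; rewrite !natrM in Ha'.
have Em : m%:R = n%:R / 3 :> algC.
  have -> : m%:R = n%:R - na%:R :> algC by rewrite -Hm addrK.
  have -> : na%:R = 2 * n%:R / 3 :> algC by rewrite -Ha'; field; rewrite ?pnatr_eq0.
  by field; rewrite ?pnatr_eq0.
rewrite Em -mulr_natr.
by field; exact: nz.
Qed.
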